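(* For $n\ge 3$ let $C_n$ be the cycle graph with $n$ vertices, and let $\mathbb{Z}$ denote the one-dimensional integer lattice (the infinite 2-regular path graph on vertex set $\mathbb{Z}$ with edges $\{k,k+1\}$). Then for every complex $u$ with $|u|<1$, \[ \lim_{n\to\infty}\zeta_{C_n}(u)=\zeta_{\mathbb{Z}}(u). \]
   Context: For a vertex transitive $(q+1)$-regular graph $G$ and a fixed vertex $x_0$, the generalized Ihara zeta function is $\zeta_G(u)=\exp\big(\sum_{m\ge1}\frac{N^0_m}{m}u^m\big)$, where $N^0_m$ is the number of reduced $x_0$-cycles of length $m$ in $G$. Here a path of length $m$ is a sequence $(e_1,\ldots,e_m)$ of oriented edges (arcs) with the terminus of $e_i$ equal to the origin of $e_{i+1}$; it has a backtracking if $e_{i+1}=e_i^{-1}$ for some $i$ (where $e^{-1}$ is the reversed arc); an $x_0$-cycle is a path starting and ending at $x_0$; it has a tail if $e_m=e_1^{-1}$; it is reduced if it has neither a backtracking nor a tail. *)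

(* Defs.v *)
From Stdlib Require Import Reals List Arith ZArith.
From Coquelicot Require Export Coquelicot.
Import ListNotations.

(* A locally finite simple graph is given by a vertex type with decidable
   equality and a neighbour list; an arc (oriented edge) is an ordered pair
   (x,y) with y a neighbour of x; its inverse is (y,x). *)
Section Graph.
Variables (V : Type) (eq_dec : forall x y : V, {x = y} + {x <> y})
          (nbrs : V -> list V).

Definition veqb (x y : V) : bool := if eq_dec x y then true else false.
Definition arc_eqb (a b : V * V) : bool := veqb (fst a) (fst b) && veqb (snd a) (snd b).
Definition arc_inv (a : V * V) : V * V := (snd a, fst a).

Fixpoint paths (m : nat) (x : V) : list (list (V * V)) :=
  match m with
  | O => [nil]
  | S m' => flat_map (fun y => map (cons (x, y)) (paths m' y)) (nbrs x)
  end.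

Fixpoint has_backtracking (p : list (V * V)) : bool :=
  match p with
  | a :: ((b :: _) as t) => arc_eqb b (arc_inv a) || has_backtracking t
  | _ => false
  end.

Definition ends_at (x0 : V) (p : list (V * V)) : bool :=
  match p with
  | nil => true
  | a :: t => veqb (snd (last t a)) x0
  end.

Definition has_tail (p : list (V * V)) : bool :=
  match p with
  | nil => false
  | a :: t => arc_eqb (last t a) (arc_inv a)
  end.

Definition reduced_cycle (x0 : V) (p : list (V * V)) : bool :=
  ends_at x0 p && negb (has_backtracking p) && negb (has_tail p).

Definition Nred (x0 : V) (m : nat) : nat :=
  length (filter (reduced_cycle x0) (paths m x0)).

(* zeta_val x0 u z : the generalized Ihara zeta function at u equals z, i.e.
   the series s = sum_{m>=1} N^0_m/m u^m converges and z = exp(s), with the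
   complex exponential written as its power series sum_k s^k/k!. *)
Definition zeta_val (x0 : V) (u z : C) : Prop :=
  exists s : C,
    is_series (fun k : nat =>
       Cmult (RtoC (INR (Nred x0 (S k)) / INR (S k))) (pow_n u (S k))) s
    /\ is_series (fun k : nat => Cdiv (pow_n s k) (RtoC (INR (fact k)))) z.
End Graph.

Definition cycle_nbrs (n : nat) (k : nat) : list nat :=
  [ (S k) mod n ; (k + n - 1) mod n ].

Definition Z_nbrs (k : Z) : list Z := [ (k + 1)%Z ; (k - 1)%Z ].

Definition zeta_cycle (n : nat) (u z : C) : Prop :=
  zeta_val nat Nat.eq_dec (cycle_nbrs n) 0%nat u z.

Definition zeta_Z (u z : C) : Prop :=
  zeta_val Z Z.eq_dec Z_nbrs 0%Z u z.

(* Main.v *)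
Require Import Defs.
From Stdlib Require Import Reals.
From Coquelicot Require Import Coquelicot.
From Stdlib Require Import List Arith ZArith Lia Lra Bool ClassicalEpsilon.
From Coquelicot Require Import Coquelicot.

Module CombM.
Import ListNotations.
Local Open Scope nat_scope.

Lemma len_filter_map {A B} (h : B -> bool) (k : A -> B) (L : list A) :
  length (filter h (map k L)) = length (filter (fun x => h (k x)) L).
Proof. induction L; simpl; auto. destruct (h (k a)); simpl; auto. Qed.

Lemma len_filter_ext {A} (h1 h2 : A -> bool) L :
  (forall x, h1 x = h2 x) -> length (filter h1 L) = length (filter h2 L).
Proof. intros H; induction L; simpl; auto. rewrite H; destruct (h2 a); simpl; auto. Qed.

Lemma len_filter_le {A} (h1 h2 : A -> bool) L :
  (forall x, h1 x = true -> h2 x = true) -> length (filter h1 L) <= length (filter h2 L).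
Proof. intros H; induction L; simpl; auto.
  destruct (h1 a) eqn:E. rewrite (H _ E); simpl; lia. destruct (h2 a); simpl; lia. Qed.

Lemma len_filter_false {A} (h : A -> bool) L :
  (forall x, h x = false) -> length (filter h L) = 0.
Proof. intros H; induction L; simpl; auto. rewrite H; auto. Qed.

Lemma len_filter_nil {A} (h : A -> bool) L :
  (forall x, In x L -> h x = false) -> length (filter h L) = 0.
Proof. intros H; induction L; simpl; auto. rewrite H; simpl; auto.
  apply IHL; intros; apply H; simpl; auto. Qed.

Lemma len_filter_1 {A} (h : A -> bool) a : length (filter h [a]) <= 1.
Proof. simpl. destruct (h a); simpl; lia. Qed.

Section Gen.
Variables (V : Type) (eq_dec : forall x y : V, {x = y} + {x <> y})
          (f g : V -> V) (P : V -> Prop).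
Hypotheses (Pf : forall x, P x -> P (f x)) (Pg : forall x, P x -> P (g x))
  (gf : forall x, P x -> g (f x) = x) (fg : forall x, P x -> f (g x) = x)
  (fneg : forall x, P x -> f x <> g x).
Let nbrs := fun x => [f x; g x].

Lemma veqb_true x y : veqb V eq_dec x y = true <-> x = y.
Proof. unfold veqb. destruct (eq_dec x y); split; congruence. Qed.

Lemma arc_eqb_true a b : arc_eqb V eq_dec a b = true <-> a = b.
Proof. destruct a as [a1 a2], b as [b1 b2]; unfold arc_eqb; simpl.
  rewrite andb_true_iff, !veqb_true. split; [intros [-> ->]; auto | intros H; inversion H; auto]. Qed.

Definition nbt (p : list (V*V)) := negb (has_backtracking V eq_dec p).
Definition notfirst (y prev : V) (q : list (V*V)) :=
  match q with [] => true | b :: _ => negb (arc_eqb V eq_dec b (y, prev)) end.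

Lemma nbt_cons a z q : nbt ((a, z) :: q) = nbt q && notfirst z a q.
Proof. unfold nbt; destruct q as [|p q]; [reflexivity|].
  change (negb (arc_eqb V eq_dec p (z,a) || has_backtracking V eq_dec (p::q)) = negb (has_backtracking V eq_dec (p::q)) && negb (arc_eqb V eq_dec p (z,a))).
  destruct (arc_eqb V eq_dec p (z, a)); destruct (has_backtracking V eq_dec (p :: q)); reflexivity. Qed.

Lemma paths_S m x : paths V nbrs (S m) x =
  map (cons (x, f x)) (paths V nbrs m (f x)) ++ map (cons (x, g x)) (paths V nbrs m (g x)) ++ [].
Proof. reflexivity. Qed.

Lemma cnt1 m : forall y prev, P y -> (prev = f y \/ prev = g y) ->
  length (filter (fun q => nbt q && notfirst y prev q) (paths V nbrs m y)) <= 1.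
Proof.
  induction m; intros y prev Py Hp.
  - apply len_filter_1.
  - rewrite paths_S, !filter_app, !length_app, !len_filter_map. simpl length at 3.
    assert (E : forall z L, length (filter (fun x => nbt ((y, z) :: x) && notfirst y prev ((y, z) :: x)) L)
        = length (filter (fun x => (nbt x && notfirst z y x) && negb (arc_eqb V eq_dec (y,z) (y,prev))) L)).
    { intros z L; apply len_filter_ext; intros x. rewrite nbt_cons. reflexivity. }
    rewrite !E.
    destruct Hp as [-> | ->].
    + assert (arc_eqb V eq_dec (y, f y) (y, f y) = true) by (apply arc_eqb_true; auto).
      rewrite H, len_filter_false by (intros; apply andb_false_r).
      assert (H0 : arc_eqb V eq_dec (y, g y) (y, f y) = false).
      { destruct (arc_eqb V eq_dec (y, g y) (y, f y)) eqn:H1; auto. apply arc_eqb_true in H1.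
        inversion H1. exfalso; apply (fneg y Py); auto. }
      rewrite H0. erewrite len_filter_ext with (h2 := fun x => nbt x && notfirst (g y) y x)
        by (intros; apply andb_true_r).
      specialize (IHm (g y) y (Pg _ Py)). rewrite fg in IHm by auto. specialize (IHm (or_introl eq_refl)). lia.
    + assert (arc_eqb V eq_dec (y, g y) (y, g y) = true) by (apply arc_eqb_true; auto).
      rewrite H. rewrite (len_filter_false _ (paths V nbrs m (g y))) by (intros; apply andb_false_r).
      assert (H0 : arc_eqb V eq_dec (y, f y) (y, g y) = false).
      { destruct (arc_eqb V eq_dec (y, f y) (y, g y)) eqn:H1; auto. apply arc_eqb_true in H1.
        inversion H1. exfalso; apply (fneg y Py); auto. }
      rewrite H0. erewrite len_filter_ext with (h2 := fun x => nbt x && notfirst (f y) y x)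
        by (intros; apply andb_true_r).
      specialize (IHm (f y) y (Pf _ Py)). rewrite gf in IHm by auto. specialize (IHm (or_intror eq_refl)). lia.
Qed.

Lemma cnt2 m x : P x -> length (filter nbt (paths V nbrs m x)) <= 2.
Proof.
  intros Px; destruct m as [|m]; [simpl; destruct (nbt []); simpl; lia|].
  rewrite paths_S, !filter_app, !length_app, !len_filter_map. simpl length at 3.
  rewrite (len_filter_ext (fun q => nbt ((x, f x) :: q)) (fun q => nbt q && notfirst (f x) x q)) by (intros; apply nbt_cons).
  rewrite (len_filter_ext (fun q => nbt ((x, g x) :: q)) (fun q => nbt q && notfirst (g x) x q)) by (intros; apply nbt_cons).
  pose proof (cnt1 m (f x) x (Pf _ Px) (or_intror (eq_sym (gf _ Px)))).
  pose proof (cnt1 m (g x) x (Pg _ Px) (or_introl (eq_sym (fg _ Px)))). lia.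
Qed.

Lemma Nred_le2 m x : P x -> Nred V eq_dec nbrs x m <= 2.
Proof.
  intros Px. unfold Nred. eapply Nat.le_trans; [|apply (cnt2 m x Px)].
  apply len_filter_le. intros p H. unfold reduced_cycle in H.
  apply andb_true_iff in H as [H _]. apply andb_true_iff in H as [_ H]. exact H.
Qed.

Fixpoint line (h : V -> V) (m : nat) (x : V) : list (V*V) :=
  match m with O => [] | S m' => (x, h x) :: line h m' (h x) end.

Lemma line_char m : forall x p, P x -> In p (paths V nbrs (S m) x) -> nbt p = true ->
  p = line f (S m) x \/ p = line g (S m) x.
Proof.
  induction m; intros x p Px Hin Hnb.
  - rewrite paths_S in Hin. rewrite app_nil_r in Hin. apply in_app_or in Hin.
    destruct Hin as [Hin|Hin]; apply in_map_iff in Hin; destruct Hin as [q [<- Hq]];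
      simpl in Hq; destruct Hq as [<-|[]]; [left|right]; reflexivity.
  - rewrite paths_S in Hin. rewrite app_nil_r in Hin. apply in_app_or in Hin.
    destruct Hin as [Hin|Hin]; apply in_map_iff in Hin; destruct Hin as [q [<- Hq]];
      rewrite nbt_cons in Hnb; apply andb_true_iff in Hnb as [Hnb Hnf].
    + destruct (IHm (f x) q (Pf _ Px) Hq Hnb) as [-> | ->]; [left; reflexivity|].
      exfalso. simpl in Hnf. rewrite gf in Hnf by auto.
      assert (arc_eqb V eq_dec (f x, x) (f x, x) = true) by (apply arc_eqb_true; auto).
      rewrite H in Hnf; discriminate.
    + destruct (IHm (g x) q (Pg _ Px) Hq Hnb) as [-> | ->]; [|right; reflexivity].
      exfalso. simpl in Hnf. rewrite fg in Hnf by auto.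
      assert (arc_eqb V eq_dec (g x, x) (g x, x) = true) by (apply arc_eqb_true; auto).
      rewrite H in Hnf; discriminate.
Qed.

Lemma last_def {A} t : forall (c a b : A), last (c :: t) a = last (c :: t) b.
Proof. induction t; intros; [reflexivity|]. change (last (a :: t) a0 = last (a::t) b). apply IHt. Qed.
Lemma last_cons {A} (b : A) t a : last (b :: t) a = last t b.
Proof. destruct t; [reflexivity|]. change (last (a0 :: t) a = last (a0::t) b). apply last_def. Qed.

Lemma line_last h m : forall x a, snd a = x -> snd (last (line h m x) a) = Nat.iter m h x.
Proof.
  induction m; intros x a Ha; [simpl; auto|].
  change (snd (last ((x, h x) :: line h m (h x)) a) = Nat.iter (S m) h x).
  rewrite last_cons. rewrite IHm by reflexivity. rewrite <- Nat.iter_succ_r. reflexivity.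
Qed.

Lemma Nred_zero m x : P x ->
  Nat.iter (S m) f x <> x -> Nat.iter (S m) g x <> x -> Nred V eq_dec nbrs x (S m) = 0.
Proof.
  intros Px Hf Hg. unfold Nred. apply len_filter_nil. intros p Hin.
  destruct (reduced_cycle V eq_dec x p) eqn:E; auto. exfalso.
  unfold reduced_cycle in E. apply andb_true_iff in E as [E _]. apply andb_true_iff in E as [He Hn].
  destruct (line_char m x p Px Hin Hn) as [-> | ->]; simpl in He; apply veqb_true in He;
    rewrite line_last in He by reflexivity; rewrite <- Nat.iter_succ_r in He; auto.
Qed.
End Gen.

Lemma mod_eq a n q r : r < n -> a = q*n + r -> a mod n = r.
Proof. intros H1 H2. symmetry. apply (Nat.mod_unique a n q r); lia. Qed.

Section Cyc.
Variable n : nat.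
Hypothesis hn : 3 <= n.
Let f := fun k => S k mod n.
Let g := fun k => (k + n - 1) mod n.

Lemma cyc_f k : k < n -> f k = if Nat.eq_dec (S k) n then 0 else S k.
Proof. intros H; unfold f; destruct (Nat.eq_dec (S k) n).
  apply (mod_eq _ _ 1); lia. apply (mod_eq _ _ 0); lia. Qed.
Lemma cyc_g k : k < n -> g k = if Nat.eq_dec k 0 then n - 1 else k - 1.
Proof. intros H; unfold g; destruct (Nat.eq_dec k 0).
  apply (mod_eq _ _ 0); lia. apply (mod_eq _ _ 1); lia. Qed.

Lemma cyc_Nred_le2 m : Nred nat Nat.eq_dec (cycle_nbrs n) 0 m <= 2.
Proof.
  apply (Nred_le2 nat Nat.eq_dec f g (fun k => k < n)); try lia.
  - intros x _; apply Nat.mod_upper_bound; lia.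
  - intros x _; apply Nat.mod_upper_bound; lia.
  - intros x Hx. assert (f x < n) by (apply Nat.mod_upper_bound; lia).
    rewrite cyc_g by auto. rewrite cyc_f by auto.
    destruct (Nat.eq_dec (S x) n); destruct (Nat.eq_dec _ 0); lia.
  - intros x Hx. assert (g x < n) by (apply Nat.mod_upper_bound; lia).
    rewrite cyc_f by auto. rewrite cyc_g by auto.
    destruct (Nat.eq_dec x 0); destruct (Nat.eq_dec _ n); lia.
  - intros x Hx. rewrite cyc_f, cyc_g by auto.
    destruct (Nat.eq_dec x 0); destruct (Nat.eq_dec _ n); lia.
Qed.

Lemma iter_f k : k < n -> Nat.iter k f 0 = k.
Proof. induction k; intros H; auto. simpl. rewrite IHk by lia. rewrite cyc_f by lia.
  destruct (Nat.eq_dec (S k) n); lia. Qed.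
Lemma iter_g k : 0 < k < n -> Nat.iter k g 0 = n - k.
Proof. induction k; intros H; [lia|]. simpl. destruct k.
  - simpl. rewrite cyc_g by lia. simpl. lia.
  - rewrite IHk by lia. rewrite cyc_g by lia. destruct (Nat.eq_dec _ 0); lia. Qed.

Lemma cyc_Nred_zero m : S m < n -> Nred nat Nat.eq_dec (cycle_nbrs n) 0 (S m) = 0.
Proof.
  intros Hm.
  apply (Nred_zero nat Nat.eq_dec f g (fun k => k < n)); try lia.
  - intros x _; apply Nat.mod_upper_bound; lia.
  - intros x _; apply Nat.mod_upper_bound; lia.
  - intros x Hx. assert (f x < n) by (apply Nat.mod_upper_bound; lia).
    rewrite cyc_g by auto. rewrite cyc_f by auto.
    destruct (Nat.eq_dec (S x) n); destruct (Nat.eq_dec _ 0); lia.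
  - intros x Hx. assert (g x < n) by (apply Nat.mod_upper_bound; lia).
    rewrite cyc_f by auto. rewrite cyc_g by auto.
    destruct (Nat.eq_dec x 0); destruct (Nat.eq_dec _ n); lia.
  - rewrite iter_f by lia. lia.
  - rewrite iter_g by lia. lia.
Qed.
End Cyc.

Lemma Z_Nred_zero m : Nred Z Z.eq_dec Z_nbrs 0%Z (S m) = 0.
Proof.
  assert (Hf : forall k z, Nat.iter k (fun x => (x + 1)%Z) z = (z + Z.of_nat k)%Z).
  { induction k; intros; simpl; [lia|]. rewrite IHk. lia. }
  assert (Hg : forall k z, Nat.iter k (fun x => (x - 1)%Z) z = (z - Z.of_nat k)%Z).
  { induction k; intros; simpl; [lia|]. rewrite IHk. lia. }
  apply (Nred_zero Z Z.eq_dec (fun x => (x+1)%Z) (fun x => (x-1)%Z) (fun _ => True)); auto.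
  all: try (intros; lia).
  all: try (rewrite Hf; lia).
  all: try (rewrite Hg; lia).
Qed.

End CombM.
Import CombM.

Lemma series_norm_le (a : nat -> C) (b : nat -> R) (s : C) (t : R) :
  @is_series C_AbsRing C_NormedModule a s -> is_series b t ->
  (forall k, norm (a k) <= b k) -> norm s <= t.
Proof.
  intros Ha Hb Hab.
  assert (H1 : is_lim_seq (fun N => norm (sum_n a N)) (norm s)).
  { apply (filterlim_comp _ _ _ (sum_n a) norm eventually (locally s) (locally (norm s))); auto.
    exact (@filterlim_norm C_AbsRing C_NormedModule s). }
  assert (H2 : forall N, norm (sum_n a N) <= sum_n b N).
  { intros N. unfold sum_n. eapply Rle_trans; [apply (@norm_sum_n_m C_AbsRing C_NormedModule)|]. apply sum_n_m_le. auto. }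
  exact (is_lim_seq_le _ _ (norm s) t H2 H1 Hb).
Qed.

Lemma series_exists_bound (a : nat -> C) (b : nat -> R) (t : R) :
  (forall k, norm (a k) <= b k) -> is_series b t ->
  exists s, @is_series C_AbsRing C_NormedModule a s /\ norm s <= t.
Proof.
  intros Hab Hb.
  assert (E : ex_series a). { apply (@ex_series_le C_AbsRing C_CompleteNormedModule a b); auto. exists t; auto. }
  destruct E as [s Hs]. exists s; split; auto. eapply series_norm_le; eauto.
Qed.

Lemma normC (x : C) : @norm C_AbsRing C_NormedModule x = Cmod x.
Proof. reflexivity. Qed.

Lemma norm_pow_n (s : C) k : norm (pow_n s k) = norm s ^ k.
Proof.
  rewrite !normC. induction k.
  - apply Cmod_1.
  - change (Cmod (Cmult s (pow_n s k)) = Cmod s * Cmod s ^ k).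
    rewrite Cmod_mult, IHk. reflexivity.
Qed.

Lemma exp_le x y : x <= y -> exp x <= exp y.
Proof. intros H; destruct (Rle_lt_or_eq_dec _ _ H) as [H' | ->]; [left; apply exp_increasing; auto| right; auto]. Qed.

Lemma C_sub_add (z : C) : z = Cplus (Cplus z (Copp (RtoC 1))) (RtoC 1).
Proof. ring. Qed.

Lemma exp_series (s : C) : exists z,
  @is_series C_AbsRing C_NormedModule (fun k => (pow_n s k / INR (Factorial.fact k))%C) z /\
  norm (minus z (RtoC 1)) <= exp (norm s) - 1.
Proof.
  set (c := fun k => (pow_n s k / INR (Factorial.fact k))%C).
  set (b := fun k => norm s ^ k / INR (Factorial.fact k)).
  assert (Hcb : forall k, norm (c k) = b k).
  { intros k. unfold c, b. rewrite normC. rewrite Cmod_div.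
    - rewrite <- normC, norm_pow_n, Cmod_R, Rabs_pos_eq; auto. apply pos_INR.
    - intros H. apply RtoC_inj in H. apply (INR_fact_neq_0 k); auto. }
  assert (Hb : is_series b (exp (norm s))).
  { eapply is_series_ext; [|apply (is_exp_Reals (norm s))]. intros k; simpl.
    unfold b, scal; simpl. rewrite pow_n_pow. unfold mult; simpl. reflexivity. }
  destruct (series_exists_bound c b (exp (norm s))) as [z [Hz _]]; auto.
  { intros k; rewrite Hcb; apply Rle_refl. }
  exists z; split; auto.
  assert (c0 : c 0%nat = (RtoC 1)). { unfold c. simpl. change (@one C_Ring) with (RtoC 1). field. }
  assert (b0 : b 0%nat = 1). { unfold b. simpl. field. }
  assert (Hz' : is_series (fun k => c (S k)) (minus z (RtoC 1))).
  { apply is_series_incr_1. match goal with |- is_series _ ?X => replace X with z end; auto.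
    rewrite c0. unfold minus, opp; simpl. apply C_sub_add. }
  assert (Hb' : is_series (fun k => b (S k)) (exp (norm s) - 1)).
  { apply is_series_incr_1. match goal with |- is_series _ ?X => replace X with (exp (norm s)) end; auto.
    rewrite b0. unfold plus; simpl. ring. }
  apply (series_norm_le (fun k => c (S k)) (fun k => b (S k))); auto.
  intros k. apply Req_le. apply Hcb.
Qed.

Lemma pow_le_1' r d : 0 <= r <= 1 -> r ^ d <= 1.
Proof. intros H; induction d; simpl; [lra|]. rewrite <- (Rmult_1_r 1). apply Rmult_le_compat; try lra.
  apply pow_le; lra. Qed.

Lemma pow_anti r n m : 0 <= r <= 1 -> (n <= m)%nat -> r ^ m <= r ^ n.
Proof. intros H Hnm. replace m with (n + (m - n))%nat by lia. rewrite pow_add.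
  rewrite <- (Rmult_1_r (r ^ n)) at 2. apply Rmult_le_compat_l; [apply pow_le; lra|]. apply pow_le_1'; auto. Qed.

Lemma cycle_series_bound (N : nat -> nat) (K : nat) (u : C) (r : R) (n : nat) :
  0 <= r < 1 -> Cmod u = r * r -> (forall m, (N (S m) <= K)%nat) ->
  (forall m, (S m < n)%nat -> N (S m) = 0%nat) ->
  exists s, @is_series C_AbsRing C_NormedModule
     (fun k => (RtoC (INR (N (S k)) / INR (S k)) * pow_n u (S k))%C) s
   /\ norm s <= INR K * r ^ n * r * / (1 - r).
Proof.
  intros Hr Hu HK Hz.
  apply (series_exists_bound _ (fun k => INR K * r ^ n * r ^ (S k))).
  - intros k. rewrite normC, Cmod_mult, Cmod_R, <- normC, norm_pow_n, normC, Hu.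
    assert (Hb : 0 <= INR K * r ^ n * r ^ S k).
    { apply Rmult_le_pos; [apply Rmult_le_pos; [apply pos_INR| apply pow_le; lra]| apply pow_le; lra]. }
    destruct (Nat.lt_ge_cases (S k) n) as [Hlt|Hge].
    + rewrite (Hz k Hlt). simpl INR at 1. unfold Rdiv. rewrite Rmult_0_l, Rabs_R0, Rmult_0_l. exact Hb.
    + assert (H1 : 1 <= INR (S k)) by (apply (le_INR 1); lia).
      assert (H2 : 0 <= INR (N (S k)) / INR (S k)).
      { unfold Rdiv; apply Rmult_le_pos; [apply pos_INR|]. left; apply Rinv_0_lt_compat; lra. }
      rewrite Rabs_pos_eq by exact H2.
      rewrite Rmult_assoc. apply Rmult_le_compat; auto.
      * apply pow_le. nra.
      * apply Rle_trans with (INR (N (S k)) / 1).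
        { unfold Rdiv; apply Rmult_le_compat_l; [apply pos_INR|]. apply Rinv_le_contravar; lra. }
        unfold Rdiv; rewrite Rinv_1, Rmult_1_r. apply le_INR; auto.
      * rewrite Rpow_mult_distr. apply Rmult_le_compat_r; [apply pow_le; lra|]. apply pow_anti; [lra|lia].
  - assert (G := is_series_scal (INR K * r^n*r) _ _ (is_series_geom r ltac:(rewrite Rabs_pos_eq; lra))).
    eapply is_series_ext; [|exact G].
    intros k. unfold scal; simpl. unfold mult; simpl. ring.
Qed.

Lemma C_one_of_norm (z : C) : Cmod (Cplus z (Copp (RtoC 1))) <= 0 -> z = RtoC 1.
Proof. intros H. assert (H0 : Cplus z (Copp (RtoC 1)) = RtoC 0).
  { apply Cmod_eq_0. pose proof (Cmod_ge_0 (Cplus z (Copp (RtoC 1)))). lra. }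
  rewrite (C_sub_add z) at 1. rewrite H0. ring. Qed.

Theorem theorem4 (u : C) (hu : (Cmod u < 1)%R) :
  exists (zZ : C) (zc : nat -> C),
    zeta_Z u zZ /\
    (forall n : nat, (3 <= n)%nat -> zeta_cycle n u (zc n)) /\
    filterlim zc eventually (locally zZ).
Proof.
  set (r := sqrt (Cmod u)).
  assert (Hr : 0 <= r < 1).
  { split; [apply sqrt_pos|]. rewrite <- sqrt_1. apply sqrt_lt_1_alt. split; [apply Cmod_ge_0|auto]. }
  assert (Hu : Cmod u = r * r) by (symmetry; apply sqrt_sqrt, Cmod_ge_0).
  set (t := fun n => INR 2 * r ^ n * r * / (1 - r)).
  assert (H : forall n, exists z, (3 <= n)%nat -> zeta_cycle n u z /\ norm (minus z (RtoC 1)) <= exp (t n) - 1).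
  { intros n. destruct (Compare_dec.le_lt_dec 3 n) as [Hn|Hn]; [|exists (RtoC 0); intros; lia].
    destruct (cycle_series_bound (Nred nat Nat.eq_dec (cycle_nbrs n) 0%nat) 2 u r n Hr Hu) as [s [Hs Hsn]].
    { intros m. apply cyc_Nred_le2; auto. }
    { intros m Hm. apply cyc_Nred_zero; auto. }
    destruct (exp_series s) as [z [Hz Hzn]]. exists z. intros _. split.
    - exists s; split; auto.
    - eapply Rle_trans; [exact Hzn|]. apply Rplus_le_compat_r, exp_le. exact Hsn. }
  destruct (cycle_series_bound (Nred Z Z.eq_dec Z_nbrs 0%Z) 0 u r 0 Hr Hu) as [sZ [HsZ HsZn]].
  { intros m. rewrite Z_Nred_zero. lia. }
  { intros m Hm. apply Z_Nred_zero. }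
  destruct (exp_series sZ) as [zZ [HzZ HzZn]].
  assert (EzZ : zZ = RtoC 1).
  { apply C_one_of_norm. eapply Rle_trans; [exact HzZn|].
    simpl INR in HsZn. rewrite !Rmult_0_l in HsZn.
    assert (norm sZ = 0) by (pose proof (Cmod_ge_0 sZ); rewrite normC in *; lra).
    rewrite H0, exp_0. lra. }
  exists zZ, (fun n => proj1_sig (constructive_indefinite_description _ (H n))).
  split; [exists sZ; split; auto|]. split.
  - intros n Hn. destruct (constructive_indefinite_description _ (H n)) as [z Hz]. simpl. apply Hz; auto.
  - subst zZ. apply filterlim_locally. intros eps.
    assert (Lt : is_lim_seq (fun n => exp (t n)) (exp 0)).
    { apply is_lim_seq_continuous; [apply derivable_continuous_pt, derivable_exp|].
      apply is_lim_seq_ext with (fun n => (INR 2 * r * / (1 - r)) * r ^ n).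
      { intros n; unfold t; ring. }
      replace (Finite 0) with (Rbar_mult (INR 2 * r * / (1 - r)) 0) by (simpl; f_equal; ring).
      apply is_lim_seq_scal_l, is_lim_seq_geom. rewrite Rabs_pos_eq; lra. }
    rewrite exp_0 in Lt. apply is_lim_seq_spec in Lt. specialize (Lt eps).
    assert (E3 : eventually (fun n => (3 <= n)%nat)) by (exists 3%nat; auto).
    eapply filter_imp; [|exact (filter_and _ _ Lt E3)].
    intros n [H1 H2]. simpl in H1.
    destruct (constructive_indefinite_description _ (H n)) as [z Hz]. simpl.
    apply (@norm_compat1 C_AbsRing C_NormedModule).
    destruct (Hz H2) as [_ Hb]. apply Rle_lt_trans with (exp (t n) - 1); auto.
    apply Rabs_lt_between in H1. lra.
Qed.
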